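(* Let $\mathbf{Y}$ be a Euclidean space, let $M,Q\subset\mathbf{Y}$ be nonempty closed sets, and let $\bar y \in M\cap Q$. Suppose that $M$ intersects $Q$ separably at $\bar y$ and that $M$ is super-regular at $\bar y$. Let $\Phi$ be a faithful approximation of the projection onto $M$ around $\bar y$. Then for every starting point $z^0 \in M$ sufficiently close to $\bar y$, the approximate alternating projection iteration \[ z^{k+1} = \Phi(z^k, y^k)\quad\text{for any } y^k \in P_Q(z^k), \qquad k=0,1,2,\ldots \] converges linearly to a point in the intersection $M\cap Q$.
   Context: For a nonempty closed set $S\subset\mathbf{Y}$, $P_S(z)$ is the (possibly multivalued) set of nearest points of $S$ to $z$. The set $M$ intersects $Q$ separably at $\bar y\in M\cap Q$ if there exists an angle $\alpha>0$ such that for any point $z\in M\setminus Q$ sufficiently close to $\bar y$ and any points $x\in P_Q(z)\setminus M$ and $z'\in P_M(x)$, the angle between the vectors $z-x$ and $z'-x$ is at least $\alpha$. The set $M$ is super-regular at $\bar y$ if, given any angle $\gamma>0$, for any points $z\in M$ and $x\notin M$ sufficiently close to $\bar y$ and any point $z'\in P_M(x)$ with $z'\neq z$, the angle between $z-z'$ and $x-z'$ is at least $\frac{\pi}{2}-\gamma$. A faithful approximation of the projection onto $M$ around $\bar y$ is a map $\Phi\colon V\times\mathbf{Y}\to M$, where $V$ is a neighborhood of $\bar y$ in $M$, such that: given any $\epsilon>0$ and angle $\alpha>0$, if points $z\in M$ and $y\notin M$ are sufficiently close to $\bar y$, then any point $\hat z\in P_M(y)$ such that the angle between $z-y$ and $\hat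 z-y$ is at least $\alpha$ satisfies $|\hat z-\Phi(z,y)|\le\epsilon|y-z|$. A sequence $(z^k)$ converges linearly to $\hat z$ if there exist constants $c\in(0,1)$ and $\rho>0$ with $|z^k-\hat z|<\rho c^k$ for all $k$. *)

(* Defs.v *)
From mathcomp Require Import all_boot all_order all_algebra.
From mathcomp Require Import all_classical all_reals all_analysis.
Set Implicit Arguments. Unset Strict Implicit. Unset Printing Implicit Defensive.
Import Order.TTheory GRing.Theory Num.Theory.
Local Open Scope ring_scope.
Local Open Scope classical_set_scope.

Section Euclid.
Variables (R : realType) (n : nat).
Notation Y := 'rV[R]_n.

Definition dotp (u v : Y) : R := (u *m v^T) 0 0.
Definition enorm (u : Y) : R := Num.sqrt (dotp u u).

Definition angle (u v : Y) : R := acos (dotp u v / (enorm u * enorm v)).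

Definition eclosed (S : set Y) : Prop :=
  forall x, (forall e : R, 0 < e -> exists s, S s /\ enorm (x - s) < e) -> S x.

Definition nearest (S : set Y) (z : Y) : set Y :=
  [set x | S x /\ forall s, S s -> enorm (z - x) <= enorm (z - s)].

Definition intersects_separably (M Q : set Y) (ybar : Y) : Prop :=
  exists alpha : R, 0 < alpha /\ exists delta : R, 0 < delta /\
    forall z, M z -> ~ Q z -> enorm (z - ybar) < delta ->
    forall x, nearest Q z x -> ~ M x ->
    forall z', nearest M x z' -> alpha <= angle (z - x) (z' - x).

Definition super_regular (M : set Y) (ybar : Y) : Prop :=
  forall gamma : R, 0 < gamma -> exists delta : R, 0 < delta /\
    forall z x, M z -> ~ M x -> enorm (z - ybar) < delta -> enorm (x - ybar) < delta ->
    forall z', nearest M x z' -> z' <> z ->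
    pi / 2 - gamma <= angle (z - z') (x - z').

(* Phi : V x Y -> M with V a neighborhood of ybar in M; Phi is given as a
   total function Y -> Y -> Y whose values on V x Y lie in M. *)
Definition faithful_approx (M : set Y) (ybar : Y) (V : set Y) (Phi : Y -> Y -> Y) : Prop :=
  [/\ V `<=` M,
      (exists r : R, 0 < r /\ forall z, M z -> enorm (z - ybar) < r -> V z),
      (forall z y, V z -> M (Phi z y)) &
      (forall eps alpha : R, 0 < eps -> 0 < alpha -> exists delta : R, 0 < delta /\
        forall z y, M z -> ~ M y -> enorm (z - ybar) < delta -> enorm (y - ybar) < delta ->
        forall zh, nearest M y zh -> alpha <= angle (z - y) (zh - y) ->
        enorm (zh - Phi z y) <= eps * enorm (y - z))].

Definition converges_linearly (z : nat -> Y) (zh : Y) : Prop :=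
  exists c rho : R, [/\ 0 < c, c < 1, 0 < rho &
    forall k, enorm (z k - zh) < rho * c ^+ k].

End Euclid.

(* Main.v *)
Require Import Defs.
From mathcomp Require Import all_boot all_order all_algebra.
From mathcomp Require Import all_classical all_reals all_analysis.
From mathcomp Require Import ring lra.
Import numFieldTopology.Exports numFieldNormedType.Exports.
Import Order.TTheory GRing.Theory Num.Theory.
Local Open Scope ring_scope.
Local Open Scope classical_set_scope.
Set Implicit Arguments. Unset Strict Implicit. Unset Printing Implicit Defensive.
Section Alg.
Variables (R : realType) (n : nat).
Implicit Types u v w : 'rV[R]_n.

Lemma eqle (x y : R) : x = y -> x <= y.
Proof. by move->. Qed.

Lemma dotpE u v : dotp u v = \sum_i u 0 i * v 0 i.
Proof. by rewrite /dotp !mxE; apply: eq_bigr => i _; rewrite mxE. Qed.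

Lemma dotpC u v : dotp u v = dotp v u.
Proof. by rewrite !dotpE; apply: eq_bigr => i _; rewrite mulrC. Qed.

Lemma dotp0r u : dotp u 0 = 0.
Proof. by rewrite dotpE big1 // => i _; rewrite mxE mulr0. Qed.

Lemma dotp_lin (a b : R) u v :
  dotp (a *: u + b *: v) (a *: u + b *: v) =
  a ^+ 2 * dotp u u + (2 * a * b) * dotp u v + b ^+ 2 * dotp v v.
Proof.
rewrite !dotpE !mulr_sumr -!big_split; apply: eq_bigr => i _; rewrite !mxE /=; ring.
Qed.

Lemma dotp_ge0 u : 0 <= dotp u u.
Proof. by rewrite dotpE; apply: sumr_ge0 => i _; rewrite -expr2 sqr_ge0. Qed.

Lemma dotp_eq0 u : dotp u u = 0 -> u = 0.
Proof.
rewrite dotpE => /eqP; rewrite psumr_eq0; last by move=> i _; rewrite -expr2 sqr_ge0.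
move=> /allP H; apply/rowP => i; rewrite mxE.
have := H i (mem_index_enum _); rewrite /= mulf_eq0 orbb => /eqP //.
Qed.

Lemma enorm_ge0 u : 0 <= enorm u.
Proof. exact: sqrtr_ge0. Qed.

Lemma enorm_sq u : enorm u ^+ 2 = dotp u u.
Proof. by rewrite /enorm sqr_sqrtr // dotp_ge0. Qed.

Lemma enorm_eq0 u : enorm u = 0 -> u = 0.
Proof. by move=> H; apply: dotp_eq0; rewrite -enorm_sq H expr0n. Qed.

Lemma enorm_gt0 u : u != 0 -> 0 < enorm u.
Proof.
move=> H; rewrite lt_neqAle enorm_ge0 andbT; apply/eqP => E.
by move: H; rewrite (enorm_eq0 (esym E)) eqxx.
Qed.

Lemma enorm0 : enorm (0 : 'rV[R]_n) = 0.
Proof.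
rewrite /enorm dotpE big1 ?sqrtr0 // => i _; by rewrite mxE mul0r.
Qed.

Lemma enormN u : enorm (- u) = enorm u.
Proof.
rewrite /enorm !dotpE; congr Num.sqrt; apply: eq_bigr => i _; rewrite !mxE; ring.
Qed.

Lemma enormB u v : enorm (u - v) = enorm (v - u).
Proof. by rewrite -enormN opprB. Qed.

Lemma CS u v : dotp u v ^+ 2 <= dotp u u * dotp v v.
Proof.
have [->|v0] := eqVneq v 0.
  by rewrite !dotp0r expr0n /= mulr0.
set A := dotp u u; set B := dotp u v; set C := dotp v v.
have C0 : 0 < C.
  rewrite lt_neqAle dotp_ge0 andbT; apply/eqP => E.
  by move: v0; rewrite (dotp_eq0 (esym E)) eqxx.
have := dotp_ge0 (C *: u + (- B) *: v); rewrite dotp_lin -/A -/B -/C => H.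
have H2 : 0 <= C * (A * C - B ^+ 2) by apply: (le_trans H); apply: eqle; ring.
by rewrite -subr_ge0; move: H2; rewrite pmulr_rge0.
Qed.

Lemma CS_abs u v : `|dotp u v| <= enorm u * enorm v.
Proof.
rewrite -sqrtr_sqr /enorm -sqrtrM ?dotp_ge0 //.
by apply: ler_wsqrtr; apply: CS.
Qed.

Lemma dotp_le u v : dotp u v <= enorm u * enorm v.
Proof. exact: le_trans (ler_norm _) (CS_abs u v). Qed.

Lemma enormD u v : enorm (u + v) <= enorm u + enorm v.
Proof.
have E : u + v = 1 *: u + 1 *: v by rewrite !scale1r.
rewrite {1}/enorm E dotp_lin -!enorm_sq.
rewrite -[enorm u + enorm v]ger0_norm ?addr_ge0 ?enorm_ge0 // -sqrtr_sqr.
apply: ler_wsqrtr.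
have := dotp_le u v; set a := enorm u; set b := enorm v; set d := dotp u v => H.
have -> : (a + b) ^+ 2 = 1 ^+ 2 * a ^+ 2 + 2 * 1 * 1 * (a * b) + 1 ^+ 2 * b ^+ 2 by ring.
by rewrite lerD2r lerD2l ler_pM2l //.
Qed.

Lemma coord_le u i : `|u 0 i| <= enorm u.
Proof.
rewrite -sqrtr_sqr /enorm; apply: ler_wsqrtr; rewrite dotpE (bigD1 i) //= expr2.
by rewrite lerDl; apply: sumr_ge0 => j _; rewrite -expr2 sqr_ge0.
Qed.

Lemma enorm_le_bound u (m : R) : 0 <= m -> (forall i, `|u 0 i| <= m) ->
  enorm u <= n%:R * m.
Proof.
move=> m0 H; rewrite /enorm -[n%:R * m]ger0_norm ?mulr_ge0 // -sqrtr_sqr.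
apply: ler_wsqrtr; rewrite dotpE.
apply: (@le_trans _ _ (\sum_(i < n) m ^+ 2)).
  apply: ler_sum => i _; rewrite -expr2 -real_normK ?num_real //.
  by rewrite lerXn2r ?nnegrE ?normr_ge0.
rewrite sumr_const card_ord exprMn [in X in _ <= X]mulrC -[m ^+ 2 *+ n]mulr_natr ler_wpM2l ?sqr_ge0 //.
case: (n) => [|k]; first by rewrite expr0n.
by rewrite expr2 -natrM ler_nat leq_pmulr.
Qed.

End Alg.
Section Ang.
Variables (R : realType) (n : nat).
Implicit Types u v w : 'rV[R]_n.

Lemma angle_dotp u v (t : R) : u != 0 -> v != 0 -> -1 <= t <= 1 ->
  acos t <= angle u v -> dotp u v <= t * (enorm u * enorm v).
Proof.
move=> u0 v0 t1; rewrite /angle.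
have P0 : 0 < enorm u * enorm v by rewrite mulr_gt0 // enorm_gt0.
set r := dotp u v / (enorm u * enorm v).
have r1 : -1 <= r <= 1.
  rewrite -ler_norml /r normrM normfV (gtr0_norm P0) ler_pdivrMr // mul1r.
  exact: CS_abs.
move=> H; rewrite -ler_pdivrMr // -/r leNgt; apply/negP => tr.
have Ht : acos t \in `[0, pi]%R by rewrite in_itv /= acos_ge0 // acos_lepi.
have Hr : acos r \in `[0, pi]%R by rewrite in_itv /= acos_ge0 // acos_lepi.
have Ht' : t \in `[-1, 1]%R by rewrite in_itv /=.
have Hr' : r \in `[-1, 1]%R by rewrite in_itv /=.
have := ltr_cos Hr Ht; rewrite !acosK // tr => /esym.
by rewrite ltNge H.
Qed.

End Ang.
Section Top.
Variables (R : realType) (n : nat).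
Implicit Types u v w : 'rV[R]_n.

Lemma coord_le_mx u i : `|u 0 i| <= `|u|.
Proof.
rewrite [X in _ <= X]mx_normrE.
by apply: (le_trans _ (le_bigmax _ _ (0, i))).
Qed.

Lemma mx_le_enorm u : `|u| <= enorm u.
Proof.
rewrite [X in X <= _]mx_normrE; apply/bigmax_leP; split; first exact: enorm_ge0.
move=> [a i] _ /=; rewrite (ord1 a); exact: coord_le.
Qed.

Lemma enorm_le_mx u : enorm u <= n%:R * `|u|.
Proof. by apply: enorm_le_bound => //; exact: coord_le_mx. Qed.

Lemma enorm_lip u v : `|enorm u - enorm v| <= enorm (u - v).
Proof.
have H1 := enormD (v - u) u; have H2 := enormD (u - v) v.
rewrite !subrK in H1 H2; rewrite enormB in H1.
rewrite ler_norml; apply/andP; split; lra.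
Qed.

Lemma small_mx_enorm (e : R) u : 0 < e -> `|u| < e / (n%:R + 1) -> enorm u < e.
Proof.
move=> e0 H.
have n1 : 0 < n%:R + 1 :> R by rewrite ltr_wpDl.
apply: (le_lt_trans (enorm_le_mx u)).
apply: (@le_lt_trans _ _ ((n%:R + 1) * `|u|)).
  by rewrite ler_wpM2r // lerDl.
by rewrite mulrC -ltr_pdivlMr.
Qed.

Lemma enorm_cont y : continuous (fun s : 'rV[R]_n => enorm (y - s)).
Proof.
move=> x; have FF : ProperFilter (nbhs x) by exact: nbhs_pfilter.
apply/(@cvgrPdist_lt _ _ _ (nbhs x) FF) => e e0.
have n1 : 0 < n%:R + 1 :> R by rewrite ltr_wpDl.
apply/nbhs_ballP; exists (e / (n%:R + 1)); first by rewrite /= divr_gt0.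
move=> s; rewrite -ball_normE /ball_ /= => hs.
apply: (le_lt_trans (enorm_lip _ _)).
have -> : y - x - (y - s) = s - x by rewrite opprB addrC addrA subrK.
rewrite enormB; apply: small_mx_enorm => //.
Qed.

Lemma eclosed_closed (M : set 'rV[R]_n) : eclosed M -> closed M.
Proof.
move=> HM x Hx; apply: HM => e e0.
have n1 : 0 < n%:R + 1 :> R by rewrite ltr_wpDl.
have := Hx _ (nbhsx_ballx x (e / (n%:R + 1)) _).
case; first by rewrite divr_gt0.
move=> s [Ms Bs]; exists s; split => //.
by apply: small_mx_enorm => //; move: Bs; rewrite -ball_normE /ball_.
Qed.

Lemma nearest_ex (M : set 'rV[R]_n) y z : eclosed M -> M z -> exists x, nearest M y x.
Proof.
move=> HM Mz.
set B := enorm (y - z).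
set A := M `&` closed_ball_ Num.norm y B.
have zA : A z by split => //; rewrite /closed_ball_ /=; exact: mx_le_enorm.
have cA : compact A.
  apply: bounded_closed_compact; last first.
    by apply: closedI; [exact: eclosed_closed | exact: closed_closed_ball_].
  exists (`|y| + B); split; first by rewrite num_real.
  move=> r Hr s [_ Hs]; rewrite /= in Hs *.
  apply: (le_trans _ (ltW Hr)).
  have -> : s = y - (y - s) by rewrite opprB addrC subrK.
  by apply: (le_trans (ler_normB _ _)); rewrite lerD2l.
have fc : {within A, continuous (fun s => enorm (y - s))}.
  by apply: continuous_subspaceT => x; exact: enorm_cont.
have [c cA' cmin] := EVT_min_rV (ex_intro _ z zA) cA fc.
move/set_mem: cA' => [Mc _].
exists c; split => // s Ms.
have [sA|sA] := leP `|y - s| B.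
  by apply: cmin; apply/mem_set.
apply: (le_trans (cmin z (mem_set zA))).
by apply: (le_trans (ltW sA)); exact: mx_le_enorm.
Qed.

End Top.
Section Seq.
Variable (R : realType).

Lemma sup_lim (u a : nat -> R) :
  (forall k m, `|u (k + m)%N - u k| <= a k) -> exists l, forall k, `|u k - l| <= a k.
Proof.
move=> H.
have a0 : forall k, 0 <= a k by move=> k; have := H k 0%N; rewrite addn0 subrr normr0.
have ub : forall j k, u j - a j <= u k + a k.
  move=> j k; have [kj|jk] := leqP k j.
    have := H k (j - k)%N; rewrite subnKC // ler_norml => /andP[_ h].
    by have := a0 j; lra.
  have := H j (k - j)%N; rewrite subnKC; last exact: ltnW.
  rewrite ler_norml => /andP[h _].
  by have := a0 k; lra.
set E := [set x | exists k, x = u k - a k].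
have hs : has_sup E.
  split; first by exists (u 0%N - a 0%N), 0%N.
  by exists (u 0%N + a 0%N) => x [k ->]; exact: ub.
exists (sup E) => k; rewrite ler_norml.
have h1 : u k - a k <= sup E by apply: sup_upper_bound => //; exists k.
have h2 : sup E <= u k + a k.
  by apply: ge_sup; [case: hs | move=> x [j ->]; exact: ub].
by apply/andP; split; lra.
Qed.

Lemma tail_small (c X e : R) : 0 <= c -> c < 1 -> 0 < e -> exists k, X * c ^+ k < e.
Proof.
move=> c0 c1 e0.
have [X0|X0] := leP X 0.
  by exists 0%N; rewrite expr0 mulr1; exact: (le_lt_trans X0).
have cabs : `|c| < 1 by rewrite ger0_norm.
have eX : 0 < e / X by rewrite divr_gt0.
have H := (cvgrPdist_lt _ _).1 (cvg_expr cabs) _ eX.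
have [k /= Hk] := filter_ex (H _).
exists k; move: Hk; rewrite sub0r normrN ger0_norm; last exact: exprn_ge0.
move=> Hk.
by rewrite mulrC -ltr_pdivlMr.
Qed.

End Seq.
Lemma tri_id (R : realType) n (p q r : 'rV[R]_n) :
  dotp (p - r) (q - r) = dotp (r - q) (r - q) - dotp (p - q) (r - q).
Proof.
rewrite !dotpE -sumrB; apply: eq_bigr => i _; rewrite !mxE; ring.
Qed.

Lemma sup_lim' (R : realType) (u a : nat -> R) :
  (forall k m, `|u (k + m)%N - u k| <= a k) ->
  forall k, `|u k - sup [set x | exists j, x = u j - a j]| <= a k.
Proof.
move=> H k.
have a0 : forall k, 0 <= a k by move=> j; have := H j 0%N; rewrite addn0 subrr normr0.
have ub : forall j k, u j - a j <= u k + a k.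
  move=> j i; have [kj|jk] := leqP i j.
    have := H i (j - i)%N; rewrite subnKC // ler_norml => /andP[_ h].
    by have := a0 j; lra.
  have := H j (i - j)%N; rewrite subnKC; last exact: ltnW.
  rewrite ler_norml => /andP[h _].
  by have := a0 i; lra.
set E := [set x | exists j, x = u j - a j].
have hs : has_sup E.
  split; first by exists (u 0%N - a 0%N), 0%N.
  by exists (u 0%N + a 0%N) => x [j ->]; exact: ub.
rewrite ler_norml.
have h1 : u k - a k <= sup E by apply: sup_upper_bound => //; exists k.
have h2 : sup E <= u k + a k.
  by apply: ge_sup; [case: hs | move=> x [j ->]; exact: ub].
by apply/andP; split; lra.
Qed.

Unset Implicit Arguments.

Theorem mainTheorem3 (R : realType) (n : nat) (M Q : set 'rV[R]_n) (ybar : 'rV[R]_n)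
  (V : set 'rV[R]_n) (Phi : 'rV[R]_n -> 'rV[R]_n -> 'rV[R]_n) :
  M !=set0 -> Q !=set0 -> eclosed M -> eclosed Q ->
  M ybar -> Q ybar ->
  intersects_separably M Q ybar -> super_regular M ybar ->
  faithful_approx M ybar V Phi ->
  exists delta : R, 0 < delta /\
    forall (z y : nat -> 'rV[R]_n),
      M (z 0%N) -> enorm (z 0%N - ybar) < delta ->
      (forall k, nearest Q (z k) (y k)) ->
      (forall k, ~ M (y k) -> z k.+1 = Phi (z k) (y k)) ->
      (forall k, M (y k) -> z k.+1 = y k) ->
      exists zh, M zh /\ Q zh /\ converges_linearly z zh.
Proof.
move=> _ _ HM HQ Mybar Qybar [alpha [alpha0 [dsep [dsep0 Hsep]]]] Hsr
  [VM [rV [rV0 HV]] PhiM Hfa].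
set a' := Num.min alpha 1.
have a'0 : 0 < a' by rewrite lt_min alpha0 ltr01.
have a'1 : a' <= 1 by rewrite ge_min lexx orbT.
have a'a : a' <= alpha by rewrite ge_min lexx.
have p2 : (2 : R) <= pi := pi_ge2 R.
have a'pi : a' <= pi by lra.
set t := cos a'.
have Ha : a' \in `[0, pi]%R by rewrite in_itv /= (ltW a'0) a'pi.
have acost : acos t = a' by rewrite /t cosK.
have t1 : -1 <= t <= 1 by rewrite cos_geN1 cos_le1.
have tlt1 : t < 1.
  have H0 : (0:R) \in `[0, pi]%R by rewrite in_itv /= lexx pi_ge0.
  by have := ltr_cos H0 Ha; rewrite cos0 a'0 => h; rewrite /t h.
have tge : -1 <= t by case/andP: t1.
set s := (1 - t) / 8.
have s0 : 0 < s by rewrite /s divr_gt0 // subr_gt0.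
have s1 : -1 <= s <= 1 by apply/andP; split; rewrite /s; lra.
set gamma := pi / 2 - acos s.
have g0 : 0 < gamma.
  have Hs : acos s \in `[0, pi]%R by rewrite in_itv /= acos_ge0 // acos_lepi.
  have H0 : acos (0:R) \in `[0, pi]%R.
    by rewrite in_itv /= acos_ge0 ?acos_lepi // lerN10 ler01.
  have Hs' : s \in `[-1, 1]%R by rewrite in_itv /=.
  have H0' : (0:R) \in `[-1, 1]%R by rewrite in_itv /= lerN10 ler01.
  have := ltr_cos Hs H0; rewrite (acosK Hs') (acosK H0') s0.
  by rewrite acos0 /gamma subr_gt0 => <-.
have [dsr [dsr0 Hsr']] := Hsr gamma g0.
have pg : pi / 2 - gamma = acos s by rewrite /gamma opprB addrC subrK.
set eps := (1 - t) / 4.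
have eps0 : 0 < eps by rewrite /eps divr_gt0 // subr_gt0.
have [dfa [dfa0 Hfa']] := Hfa eps a' eps0 a'0.
set c := (3 + t) / 4.
have c0 : 0 < c by rewrite /c; lra.
have c1 : c < 1 by rewrite /c; lra.
have ec : eps + t + 2 * s <= c by rewrite /eps /s /c; lra.
set Delta := Num.min (Num.min dsep dsr) (Num.min dfa rV).
have D0 : 0 < Delta by rewrite !lt_min dsep0 dsr0 dfa0 rV0.
have Dsep : Delta <= dsep by rewrite !ge_min lexx.
have Dsr : Delta <= dsr by rewrite !ge_min lexx !orbT.
have Dfa : Delta <= dfa by rewrite !ge_min lexx !orbT.
have DrV : Delta <= rV by rewrite !ge_min lexx !orbT.
set L := 2 / (1 - c).
have c1' : 0 < 1 - c by rewrite subr_gt0.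
have L0 : 0 < L by rewrite /L divr_gt0.
have L1 : L * (1 - c) = 2 by rewrite /L divfK // gt_eqF.
set K := L + 1.
have K0 : 0 < K by rewrite /K; lra.
exists (Delta / (2 * K)); split; first by rewrite divr_gt0 // mulr_gt0.
move=> z y Mz0 z0d Hnear HPhi HMy.
have step : forall zz yy zn, M zz -> enorm (zz - ybar) < Delta / 2 -> nearest Q zz yy ->
  (~ M yy -> zn = Phi zz yy) -> (M yy -> zn = yy) ->
  [/\ M zn, enorm (zn - yy) <= c * enorm (zz - yy) &
      enorm (zn - zz) <= 2 * enorm (zz - yy)].
  move=> zz yy zn Mzz zzd [Qyy nyy] H1 H2.
  set d := enorm (zz - yy).
  have d0 : 0 <= d := enorm_ge0 _.
  have dle : d <= enorm (zz - ybar) by exact: nyy.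
  have yyd : enorm (yy - ybar) < Delta.
    have -> : yy - ybar = (yy - zz) + (zz - ybar) by rewrite addrA subrK.
    apply: (le_lt_trans (enormD _ _)); rewrite enormB -/d; lra.
  have zzD : enorm (zz - ybar) < Delta by lra.
  case: (pselect (M yy)) => Myy.
    rewrite (H2 Myy) subrr enorm0 enormB -/d; split => //.
      by rewrite mulr_ge0 // ltW.
    lra.
  rewrite (H1 Myy).
  have yyzz : yy != zz by apply/eqP => E; apply: Myy; rewrite E.
  have nQ : ~ Q zz.
    move=> Qzz; have := nyy zz Qzz; rewrite subrr enorm0 -/d => h.
    have /enorm_eq0 /eqP : d = 0 by apply/le_anti; rewrite h d0.
    by rewrite subr_eq0 eq_sym (negbTE yyzz).
  have [zh [Mzh nzh]] := nearest_ex yy HM Mzz.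
  have ang := Hsep zz Mzz nQ (lt_le_trans zzD Dsep) yy (conj Qyy nyy) Myy zh (conj Mzh nzh).
  have ang' : acos t <= angle (zz - yy) (zh - yy) by rewrite acost; exact: le_trans ang.
  have a_ne : zz - yy != 0 by rewrite subr_eq0 eq_sym.
  have yyzh : yy != zh by apply/eqP => E; apply: Myy; rewrite E.
  have b_ne : zh - yy != 0 by rewrite subr_eq0 eq_sym.
  have Dab := angle_dotp a_ne b_ne t1 ang'.
  have dpos : 0 < d := enorm_gt0 a_ne.
  have zhzz : zh <> zz.
    move=> E; move: Dab; rewrite E -enorm_sq -/d expr2 => h.
    have : 0 < d * d * (1 - t) by rewrite !mulr_gt0 // subr_gt0.
    lra.
  have sr := Hsr' zz yy Mzz Myy (lt_le_trans zzD Dsr) (lt_le_trans yyd Dsr) zh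
    (conj Mzh nzh) zhzz.
  rewrite pg in sr.
  have c_ne : zz - zh != 0 by rewrite subr_eq0; apply/eqP => E; apply: zhzz.
  have d_ne : yy - zh != 0 by rewrite subr_eq0.
  have S := angle_dotp c_ne d_ne s1 sr.
  rewrite -/d in Dab.
  rewrite tri_id -enorm_sq in S.
  set B := enorm (zh - yy) in Dab S.
  have B0 : 0 < B := enorm_gt0 b_ne.
  have EB : enorm (yy - zh) = B by rewrite enormB.
  rewrite EB in S.
  have BA : B <= d by have := nzh zz Mzz; rewrite EB enormB.
  set X := enorm (zz - zh) in S.
  have XB : X <= d + B.
    rewrite /X; have -> : zz - zh = (zz - yy) + (yy - zh) by rewrite addrA subrK.
    by apply: (le_trans (enormD _ _)); rewrite EB.
  have X0 : 0 <= X := enorm_ge0 _.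
  have h1 : s * (X * B) <= s * ((2 * d) * B).
    by rewrite ler_pM2l // ler_pM2r //; lra.
  have h2 : B * B <= B * ((t + 2 * s) * d).
    have -> : B * ((t + 2 * s) * d) = t * (d * B) + s * ((2 * d) * B) by ring.
    by move: S; rewrite expr2; lra.
  have Bb : B <= (t + 2 * s) * d by rewrite -(ler_pM2l B0).
  have F := Hfa' zz yy Mzz Myy (lt_le_trans zzD Dfa) (lt_le_trans yyd Dfa) zh
    (conj Mzh nzh) (ltac:(by rewrite -acost)).
  rewrite [enorm (yy - zz)]enormB -/d in F.
  have Pyy : enorm (Phi zz yy - yy) <= c * d.
    have -> : Phi zz yy - yy = (Phi zz yy - zh) + (zh - yy) by rewrite addrA subrK.
    apply: (le_trans (enormD _ _)); rewrite [enorm (Phi zz yy - zh)]enormB -/B.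
    apply: (le_trans (_ : _ <= (eps + t + 2 * s) * d)); last by rewrite ler_wpM2r.
    have -> : (eps + t + 2 * s) * d = eps * d + (t + 2 * s) * d by ring.
    by apply: lerD.
  split => //.
    by apply: PhiM; apply: HV => //; exact: (lt_le_trans zzD DrV).
  have -> : Phi zz yy - zz = (Phi zz yy - yy) + (yy - zz) by rewrite addrA subrK.
  apply: (le_trans (enormD _ _)); rewrite [enorm (yy - zz)]enormB -/d.
  have : c * d <= d by rewrite ler_piMl // ltW.
  lra.
set d0 := enorm (z 0%N - y 0%N).
set r0 := enorm (z 0%N - ybar).
have d0r : d0 <= r0 by exact: (Hnear 0%N).2 _ Qybar.
have d00 : 0 <= d0 := enorm_ge0 _.
have r0D : r0 * K < Delta / 2.
  move: z0d; rewrite -/r0 ltr_pdivlMr ?mulr_gt0 // => h.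
  rewrite ltr_pdivlMr //.
  have -> : r0 * K * 2 = r0 * (2 * K) by ring.
  exact: h.
have closeI : forall k, enorm (z k - z 0%N) <= L * (d0 * (1 - c ^+ k)) ->
    enorm (z k - ybar) < Delta / 2.
  move=> k hk.
  have ck : 0 <= c ^+ k := exprn_ge0 k (ltW c0).
  have h1 : L * (d0 * (1 - c ^+ k)) <= L * r0.
    rewrite ler_pM2l //.
    have : 0 <= d0 * c ^+ k := mulr_ge0 d00 ck.
    lra.
  have -> : z k - ybar = (z k - z 0%N) + (z 0%N - ybar) by rewrite addrA subrK.
  apply: (le_lt_trans (enormD _ _)); rewrite -/r0.
  have : L * r0 + r0 = r0 * K by rewrite /K; ring.
  lra.
have Inv : forall k, [/\ M (z k), enorm (z k - y k) <= c ^+ k * d0 &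
    enorm (z k - z 0%N) <= L * (d0 * (1 - c ^+ k))].
  elim => [|k [Mk dk zk]].
    by rewrite expr0 mul1r subrr enorm0 subrr !mulr0.
  have [Mk1 dk1 zk1] := step (z k) (y k) (z k.+1) Mk (closeI k zk) (Hnear k)
    (HPhi k) (HMy k).
  have dd : enorm (z k.+1 - y k.+1) <= enorm (z k.+1 - y k) :=
    (Hnear k.+1).2 _ (Hnear k).1.
  have ck : 0 <= c ^+ k := exprn_ge0 k (ltW c0).
  split => //.
    rewrite exprS -mulrA; apply: (le_trans dd); apply: (le_trans dk1).
    by rewrite ler_pM2l.
  have -> : z k.+1 - z 0%N = (z k.+1 - z k) + (z k - z 0%N) by rewrite addrA subrK.
  apply: (le_trans (enormD _ _)).
  have e1 : 2 * enorm (z k - y k) <= 2 * (c ^+ k * d0) by rewrite ler_pM2l.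
  have -> : L * (d0 * (1 - c ^+ k.+1)) = 2 * (c ^+ k * d0) + L * (d0 * (1 - c ^+ k)).
    by rewrite exprS -L1; ring.
  lra.
have stepb : forall k, enorm (z k.+1 - z k) <= 2 * (c ^+ k * d0).
  move=> k; have [Mk dk zk] := Inv k.
  have [_ _ h] := step (z k) (y k) (z k.+1) Mk (closeI k zk) (Hnear k) (HPhi k) (HMy k).
  by apply: (le_trans h); rewrite ler_pM2l.
have tele : forall k m, enorm (z (k + m)%N - z k) <= L * d0 * c ^+ k * (1 - c ^+ m).
  move=> k; elim => [|m IH].
    by rewrite addn0 subrr enorm0 expr0 subrr mulr0.
  rewrite addnS.
  have -> : z (k + m).+1 - z k = (z (k + m).+1 - z (k + m)%N) + (z (k + m)%N - z k).
    by rewrite addrA subrK.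
  apply: (le_trans (enormD _ _)).
  have := stepb (k + m)%N; rewrite exprD => h.
  have -> : L * d0 * c ^+ k * (1 - c ^+ m.+1) =
    2 * (c ^+ k * c ^+ m * d0) + L * d0 * c ^+ k * (1 - c ^+ m).
    by rewrite exprS -L1; ring.
  lra.
have tele' : forall k m, enorm (z (k + m)%N - z k) <= L * d0 * c ^+ k.
  move=> k m; apply: (le_trans (tele k m)).
  have cm : 0 <= c ^+ m := exprn_ge0 m (ltW c0).
  have ck : 0 <= c ^+ k := exprn_ge0 k (ltW c0).
  apply: ler_piMr; last lra.
  apply: mulr_ge0 => //; apply: mulr_ge0 => //; exact: ltW.
set zh := \row_i sup [set x | exists j, x = z j 0 i - L * d0 * c ^+ j].
have zkzh : forall k, enorm (z k - zh) <= n%:R * (L * d0 * c ^+ k).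
  move=> k; apply: enorm_le_bound.
    apply: mulr_ge0; last exact: exprn_ge0 (ltW c0).
    by apply: mulr_ge0 => //; exact: ltW.
  move=> i; rewrite !mxE.
  apply: (sup_lim' (u := fun j => z j 0 i) (a := fun j => L * d0 * c ^+ j)) => k' m.
  apply: le_trans (tele' k' m).
  by have := coord_le (z (k' + m)%N - z k') i; rewrite !mxE.
have n0 : 0 <= n%:R :> R := ler0n _ _.
have Ld0 : 0 <= L * d0 by apply: mulr_ge0 => //; exact: ltW.
have nLd0 : 0 <= n%:R * (L * d0) by apply: mulr_ge0.
exists zh; split; [|split].
- apply: HM => e e0.
  have [k hk] := tail_small (n%:R * (L * d0)) (ltW c0) c1 e0.
  exists (z k); split; first by case: (Inv k).
  rewrite enormB; apply: (le_lt_trans (zkzh k)).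
  by move: hk; rewrite !mulrA.
- apply: HQ => e e0.
  have [k hk] := tail_small (n%:R * (L * d0) + d0) (ltW c0) c1 e0.
  exists (y k); split; first exact: (Hnear k).1.
  have -> : zh - y k = (zh - z k) + (z k - y k) by rewrite addrA subrK.
  apply: (le_lt_trans (enormD _ _)); rewrite [enorm (zh - z k)]enormB.
  have [_ dk _] := Inv k.
  have := zkzh k; move: hk.
  have -> : n%:R * (L * d0 * c ^+ k) = n%:R * (L * d0) * c ^+ k by rewrite !mulrA.
  have -> : (n%:R * (L * d0) + d0) * c ^+ k = n%:R * (L * d0) * c ^+ k + c ^+ k * d0.
    by ring.
  lra.
- exists c, (n%:R * (L * d0) + 1); split => //.
    by rewrite ltr_wpDl.
  move=> k; apply: (le_lt_trans (zkzh k)).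
  have ck : 0 < c ^+ k := exprn_gt0 k c0.
  have -> : (n%:R * (L * d0) + 1) * c ^+ k = n%:R * (L * d0 * c ^+ k) + c ^+ k.
    by ring.
  by rewrite ltrDl.
Qed.
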